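(* Let $q$ be a prime power and $h$ a nonnegative integer. If $M$ is a matroid and $X\subseteq E(M)$ satisfies $r_M(X)\le h$ and $\mathrm{si}(M\setminus X)\cong \mathrm{PG}(r(M)-1,q)$, then $M/X$ has no $(q,h+1)$-stack restriction.
   Context: $\mathrm{si}(\cdot)$ denotes simplification and $\mathrm{PG}(k-1,q)$ the rank-$k$ projective geometry over $\mathrm{GF}(q)$. For a prime power $q$ and nonnegative integers $h,t$, a matroid $S$ is a $(q,h,t)$-stack if there are pairwise disjoint subsets $F_1,\dots,F_h$ of $E(S)$ whose union is spanning in $S$, such that for each $i\in\{1,\dots,h\}$ the matroid $(S/(F_1\cup\dots\cup F_{i-1}))|F_i$ has rank at most $t$ and is not $\mathrm{GF}(q)$-representable. A $(q,h)$-stack is a $(q,h,t)$-stack for some $t\ge 0$. A matroid has a stack restriction if some restriction of it is such a stack. *)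

(* Defs.v *)
From HB Require Import structures.
From mathcomp Require Import all_boot all_order all_algebra all_fingroup all_field.
Set Implicit Arguments. Unset Strict Implicit. Unset Printing Implicit Defensive.

Section Matroids.
Variable T : finType.

Definition is_matroid (E : {set T}) (r : {set T} -> nat) : Prop :=
  [/\ forall A : {set T}, A \subset E -> r A <= #|A|,
      forall A B : {set T}, A \subset B -> B \subset E -> r A <= r B &
      forall A B : {set T}, A \subset E -> B \subset E ->
        r (A :|: B) + r (A :&: B) <= r A + r B].

(* rank function of the contraction (by X) of a matroid with rank r:
   r_{M/X}(A) = r(A u X) - r(X).  Ground set of M/X is E :\: X. *)
Definition contr_rank (r : {set T} -> nat) (X : {set T}) : {set T} -> nat :=
  fun A => r (A :|: X) - r X.

Definition GFq_representable (q : nat) (Z : {set T}) (r : {set T} -> nat) : Prop :=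
  exists (F : finFieldType) (n : nat) (f : T -> 'rV[F]_n),
    #|F| = q /\
    forall A : {set T}, A \subset Z -> r A = \rank (\sum_(x in A) <<f x>>)%MS.

(* The matroid (S, r) is isomorphic to PG(k-1, q): for a field F of order q,
   x |-> <f x> is a bijection from S onto the 1-dimensional subspaces of F^k
   and ranks are preserved. *)
Definition iso_PG (S : {set T}) (r : {set T} -> nat) (k q : nat) : Prop :=
  exists (F : finFieldType) (f : T -> 'rV[F]_k),
    [/\ #|F| = q,
        forall x, x \in S -> f x != 0%R,
        forall x y, x \in S -> y \in S -> (f x == f y)%MS -> x = y,
        forall v : 'rV[F]_k, v != 0%R -> exists2 x, x \in S & (f x == v)%MS &
        forall A : {set T}, A \subset S -> r A = \rank (\sum_(x in A) <<f x>>)%MS].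

(* S is a simplification of the matroid (Z, r): a set of non-loops, pairwise
   non-parallel, containing a representative of every parallel class. *)
Definition simplification_set (Z : {set T}) (r : {set T} -> nat) (S : {set T}) : Prop :=
  [/\ S \subset Z,
      forall x, x \in S -> r [set x] = 1,
      forall x y, x \in S -> y \in S -> x != y -> r [set x; y] = 2 &
      forall e, e \in Z -> r [set e] = 1 ->
        exists2 x, x \in S & r [set x; e] = 1].

Definition si_iso_PG (Z : {set T}) (r : {set T} -> nat) (k q : nat) : Prop :=
  exists S, simplification_set Z r S /\ iso_PG S r k q.

Definition is_stack (q h t : nat) (Z : {set T}) (r : {set T} -> nat) : Prop :=
  exists F : nat -> {set T},
    [/\ forall i, i < h -> F i \subset Z,
        forall i j, i < h -> j < h -> i != j -> [disjoint F i & F j],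
        r (\bigcup_(i < h) F i) = r Z &
        forall i, i < h ->
          let G := \bigcup_(j < i) F j in
          contr_rank r G (F i) <= t /\
          ~ GFq_representable q (F i) (contr_rank r G)].

Definition has_stack_restriction (q h : nat) (Z : {set T}) (r : {set T} -> nat) : Prop :=
  exists (t : nat) (Y : {set T}), Y \subset Z /\ is_stack q h t Y r.

Definition prime_power (q : nat) : Prop :=
  exists p k, prime p /\ 0 < k /\ q = p ^ k.

End Matroids.

(* Main.v *)
Require Import Defs.
From HB Require Import structures.
From mathcomp Require Import all_boot all_order all_algebra all_fingroup all_field.
From mathcomp Require Import zify.
From Stdlib Require Import Lia.
Set Implicit Arguments. Unset Strict Implicit. Unset Printing Implicit Defensive.
Section Mx.
Local Open Scope ring_scope.
Lemma contr_rep (F : fieldType) n (I : finType) (g : I -> 'rV[F]_n) (A G : {set I}) :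
  [disjoint A & G] ->
  let B := (\sum_(x in G) <<g x>>)%MS in
  \rank (\sum_(x in A) <<(g x *m cokermx B)%R>>)%MS =
  (\rank (\sum_(x in A :|: G) <<g x>>)%MS - \rank B)%N.
Proof.
move=> dAG B.
set C := (\sum_(x in A) <<g x>>)%MS.
set P := cokermx B.
have eU : (\sum_(x in A :|: G) <<g x>>)%MS = (C + B)%MS.
  rewrite -bigU //; apply: eq_bigl => x; by rewrite !inE.
rewrite eU.
have e1 : (\sum_(x in A) <<g x *m P>> :=: C *m P)%MS.
  apply: eqmx_trans; last exact: eqmx_sym (sumsmxMr _ _ _).
  apply: eqmx_sums => x _. apply: eqmx_trans (genmxE _) _.
  apply: eqmx_sym; apply: eqmxMr; exact: genmxE.
rewrite e1.
have e2 : ((C + B)%MS *m P :=: C *m P)%MS.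
  apply: eqmx_trans (addsmxMr _ _ _) _.
  rewrite /P mulmx_coker; exact: addsmx0.
have KB : (kermx P :=: B)%MS.
  apply/eqmxP; apply/andP; split.
    by rewrite submxE mulmx_ker.
  by apply/sub_kermxP; rewrite mulmx_coker.
have e3 : \rank ((C + B) :&: kermx P)%MS = \rank B.
  apply: eqmx_rank; apply/andP; split.
    by rewrite -KB capmxSr.
  by rewrite sub_capmx addsmxSr KB submx_refl.
have := mxrank_mul_ker (C + B)%MS P.
rewrite e2 e3 => <-.
by rewrite addnK.
Qed.
End Mx.




Section M.
Variables (T : finType) (E : {set T}) (r : {set T} -> nat).
Hypothesis hM : is_matroid E r.

Lemma r0 : r set0 = 0.
Proof. case: hM => h1 _ _; have := h1 set0 (sub0set _); rewrite cards0; lia. Qed.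

Lemma rmono (A B : {set T}) : A \subset B -> B \subset E -> r A <= r B.
Proof. by case: hM => _ h2 _; apply: h2. Qed.

Lemma rsub (A B : {set T}) : A \subset E -> B \subset E -> r (A :|: B) + r (A :&: B) <= r A + r B.
Proof. by case: hM => _ _ h3; apply: h3. Qed.

Lemma rsub' (A B C : {set T}) : A \subset E -> B \subset E -> C \subset A :&: B ->
  r (A :|: B) + r C <= r A + r B.
Proof.
move=> hA hB hC; have := rsub hA hB.
have := @rmono C (A :&: B) hC (subset_trans (subsetIl _ _) hA); lia.
Qed.

Lemma add_par (C : {set T}) x e : C \subset E -> x \in C -> e \in E -> r [set x] = 1 ->
  r [set x; e] = 1 -> r (e |: C) <= r C.
Proof.
move=> hC xC eE h1 h2.
have xE : x \in E by apply: (subsetP hC).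
have hs : [set x; e] \subset E by apply/subsetP => y; rewrite !inE => /orP[]/eqP->.
have := @rsub' C [set x; e] [set x] hC hs.
have -> : C :|: [set x; e] = e |: C.
  apply/setP => y; rewrite !inE; case: (y =P x) => [->|_]; rewrite ?xC ?orbT //=; by case: (y == e); case: (y \in C).
rewrite h1 h2; move=> H; suff : r (e |: C) + 1 <= r C + 1 by lia.
apply: H; apply/subsetP => y; rewrite !inE => /eqP->; by rewrite xC eqxx.
Qed.

Lemma add_loop (C : {set T}) e : C \subset E -> e \in E -> r [set e] = 0 -> r (e |: C) <= r C.
Proof.
move=> hC eE h0.
have hs : [set e] \subset E by rewrite sub1set.
have := @rsub' C [set e] set0 hC hs (sub0set _).
by rewrite setUC h0 r0; lia.
Qed.

Lemma closure (C D : {set T}) : C \subset E -> D \subset E ->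
  (forall e, e \in D -> r (e |: C) <= r C) -> r (C :|: D) <= r C.
Proof.
move=> hC hD hcl.
suff H : forall s : seq T, {subset s <= D} -> r (C :|: [set x in s]) <= r C.
  have -> : D = [set x in enum D] by apply/setP => x; rewrite inE mem_enum.
  by apply: H => x; rewrite mem_enum.
elim => [|x s IH] hs.
  have -> : [set x in [::]] = set0 :> {set T} by apply/setP => y; rewrite !inE.
  by rewrite setU0.
have xD : x \in D by apply: hs; rewrite inE eqxx.
have xE : x \in E by apply: (subsetP hD).
set U := C :|: [set y in s].
have hU : U \subset E.
  rewrite subUset hC; apply/subsetP => y; rewrite inE => ys.
  by apply: (subsetP hD); apply: hs; rewrite inE ys orbT.
have IH' : r U <= r C by apply: IH => y ys; apply: hs; rewrite inE ys orbT.
have hxC : x |: C \subset E by rewrite subUset sub1set xE hC.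
have := @rsub' U (x |: C) C hU hxC.
have -> : U :|: (x |: C) = C :|: [set y in x :: s].
  apply/setP => y; rewrite /U !inE; by case: (y == x); case: (y \in C); case: (y \in s); rewrite ?orbT.
have : C \subset U :&: (x |: C) by rewrite subsetI subsetUl subsetUr.
move=> h /(_ h); have := hcl x xD; lia.
Qed.

Lemma dmono (X A B : {set T}) : X \subset E -> A \subset B -> B \subset E ->
  r (B :|: X) + r A <= r (A :|: X) + r B.
Proof.
move=> hX hAB hB.
have hA := subset_trans hAB hB.
have := @rsub' (A :|: X) B A.
have -> : A :|: X :|: B = B :|: X.
  apply/setP => y; rewrite !inE; have := subsetP hAB y.
  by case: (y \in A); case: (y \in B); case: (y \in X) => //= ->.
apply; rewrite ?subUset ?hA ?hX //.
by rewrite subsetI subsetUl hAB.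
Qed.


Lemma rep_exists (Z S : {set T}) k q : Z \subset E -> simplification_set Z r S ->
  iso_PG S r k q ->
  exists (F : finFieldType) (g : T -> 'rV[F]_k), #|F| = q /\
    forall A : {set T}, A \subset Z -> r A = \rank (\sum_(x in A) <<g x>>)%MS.
Proof.
move=> hZ [hSZ hS1 hS2 hS3] [F [f [hq _ _ _ hf]]].
pose pk x := [pick y in S | (r [set x] == 1) && (r [set y; x] == 1)].
pose g x := if pk x is Some y then f y else 0%R.
exists F, g; split => // A hA.
have hAE : A \subset E := subset_trans hA hZ.
have hSE : S \subset E := subset_trans hSZ hZ.
pose R := [set y | [exists x in A, pk x == Some y]].
have hR : forall y, y \in R -> exists2 x, x \in A & pk x = Some y.
  by move=> y; rewrite inE => /existsP[x /andP[xA /eqP e]]; exists x.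
have hpk : forall x y, pk x = Some y -> [/\ y \in S, r [set x] = 1 & r [set y; x] = 1].
  move=> x y; rewrite /pk; case: pickP => // z /andP[zS /andP[/eqP h1 /eqP h2]] [<-].
  by [].
have hRS : R \subset S.
  by apply/subsetP => y /hR[x _ /hpk[]].
have hRE : R \subset E := subset_trans hRS hSE.
have e1 : r (A :|: R) <= r A.
  apply: closure => // y yR; have [x xA /hpk[yS h1 h2]] := hR y yR.
  apply: (@add_par _ x) => //; first by apply: (subsetP hRE).
  by rewrite setUC.
have e2 : r (R :|: A) <= r R.
  apply: closure => // e eA.
  have eZ : e \in Z := subsetP hA e eA.
  have eE : e \in E := subsetP hZ e eZ.
  have hle : r [set e] <= 1.
    case: hM => h1 _ _; have := h1 [set e]; rewrite cards1; apply; by rewrite sub1set.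
  case h: (r [set e] == 1).
    have [y yS hy] := hS3 e eZ (eqP h).
    case def: (pk e) => [y'|].
      have [y'S h1 h2] := hpk _ _ def.
      apply: (@add_par _ y') => //; last by apply: hS1.
      by rewrite inE; apply/existsP; exists e; rewrite eA def eqxx.
    move: def; rewrite /pk; case: pickP => // /(_ y); by rewrite yS h hy eqxx.
  apply: add_loop => //; move/negbT: h; lia.
have eAR : r A = r R.
  have := @rmono A (A :|: R) (subsetUl _ _); rewrite subUset hAE hRE => /(_ isT).
  have := @rmono R (R :|: A) (subsetUl _ _); rewrite subUset hAE hRE => /(_ isT).
  move=> ha hb; move: e2 ha; rewrite [R :|: A]setUC => e2 ha; lia.
rewrite eAR (hf R hRS); apply: eqmx_rank; apply/andP; split.
  apply/sumsmx_subP => y yR; have [x xA hx] := hR y yR.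
  apply: (sumsmx_sup x) => //; by rewrite /g hx submx_refl.
apply/sumsmx_subP => x xA; rewrite /g; case def: (pk x) => [y|].
  apply: (sumsmx_sup y) => //; rewrite ?submx_refl //.
  by rewrite inE; apply/existsP; exists x; rewrite xA def eqxx.
by rewrite genmx0 sub0mx.
Qed.

End M.


Lemma arith (x gx agx ag g fx f : nat) :
  fx - f = gx - g -> agx + g <= gx + ag -> fx + ag <= agx + f ->
  x <= gx -> gx <= agx -> g <= gx -> ag <= agx -> f <= fx ->
  (agx - x) - (gx - x) = ag - g.
Proof. lia. Qed.

Theorem lemma4p1 (T : finType) (q h : nat) (E X : {set T}) (r : {set T} -> nat) :
  prime_power q ->
  is_matroid E r ->
  X \subset E ->
  r X <= h ->
  si_iso_PG (E :\: X) r (r E) q ->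
  ~ has_stack_restriction q h.+1 (E :\: X) (contr_rank r X).
Proof.
move=> _ hM hX hrX [S [hsimp hiso]] [t [Y [hY [Fb [hFsub hdisj hspan hblk]]]]].
have hZ : E :\: X \subset E := subsetDl _ _.
have [Fld [g [hq hg]]] := rep_exists hM hZ hsimp hiso.
pose Gs i := \bigcup_(j < i) Fb j.
have hGs : forall i, i <= h.+1 -> Gs i \subset E :\: X.
  move=> i hi; apply/bigcupsP => j _; apply: subset_trans hY.
  by apply: hFsub; apply: leq_trans (ltn_ord j) hi.
have hGsE : forall i, i <= h.+1 -> Gs i \subset E := fun i hi => subset_trans (hGs i hi) hZ.
have GsS : forall i, Gs i.+1 = Gs i :|: Fb i by move=> i; rewrite /Gs big_ord_recr.
pose D i := r (Gs i :|: X) - r (Gs i).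
have hGX : forall i, i <= h.+1 -> Gs i :|: X \subset E by move=> i hi; rewrite subUset hGsE.
have Dmono : forall i, i < h.+1 -> D i.+1 <= D i.
  move=> i hi; rewrite /D.
  have h1 := @dmono _ _ _ hM X (Gs i) (Gs i.+1) hX ltac:(by rewrite GsS subsetUl) (hGsE _ hi).
  have h2 := @rmono _ _ _ hM (Gs i) (Gs i :|: X) (subsetUl _ _) (hGX _ (ltnW hi)).
  have h3 := @rmono _ _ _ hM (Gs i.+1) (Gs i.+1 :|: X) (subsetUl _ _) (hGX _ hi).
  lia.
have D0 : D 0 <= h.
  rewrite /D /Gs big_ord0 set0U (r0 hM); lia.
have [i hi] : exists i : 'I_h.+1, D i.+1 = D i.
  case: (boolP [exists i : 'I_h.+1, D i.+1 == D i]) => [/existsP[i /eqP hi]|/existsPn hn].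
    by exists i.
  have : forall i, i <= h.+1 -> D i + i <= D 0.
    elim => [|i IH] hi; first by rewrite addn0.
    have := IH (ltnW hi); have := Dmono i hi; have := hn (Ordinal hi) => /= /eqP; lia.
  move=> /(_ h.+1 (leqnn _)); lia.
have [_ hnr] := hblk i (ltn_ord i).
apply: hnr.
set G := \bigcup_(j < i) Fb j.
have hGi : G \subset E :\: X by apply: hGs; apply: ltnW.
have hFi : Fb i \subset E :\: X := subset_trans (hFsub i (ltn_ord i)) hY.
have dFG : [disjoint Fb i & G].
  apply/bigcup_disjoint => j _; apply: hdisj => //.
    by apply: leq_trans (ltn_ord j) (ltnW (ltn_ord i)).
  by rewrite neq_ltn ltn_ord orbT.
exists Fld, (r E), (fun x => (g x *m cokermx (\sum_(x in G) <<g x>>)%MS)%R); split => //.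
move=> A hA.
have dAG : [disjoint A & G] := disjointWl hA dFG.
rewrite (contr_rep g dAG).
have hAG : A :|: G \subset E :\: X by rewrite subUset hGi (subset_trans hA hFi).
rewrite -(hg _ hAG) -(hg _ hGi) /contr_rank.
have hXE := hX.
have hAGE : A :|: G \subset E := subset_trans hAG hZ.
have hGE : G \subset E := subset_trans hGi hZ.
have hFE : Fb i \subset E := subset_trans hFi hZ.
have hG1 : Gs i.+1 = G :|: Fb i by rewrite GsS.
move: hi; rewrite /D hG1 -/G => hi.
have s1 : A :|: G \subset G :|: Fb i by rewrite setUC setUS.
have hG1E : G :|: Fb i \subset E by rewrite subUset hGE.
have k1 := @dmono _ _ _ hM X G (A :|: G) hX (subsetUr _ _) hAGE.
have k2 := @dmono _ _ _ hM X (A :|: G) (G :|: Fb i) hX s1 hG1E.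
have m1 := @rmono _ _ _ hM X (G :|: X) (subsetUr _ _) ltac:(by rewrite subUset hGE hX).
have m2 := @rmono _ _ _ hM (G :|: X) (A :|: G :|: X) (setSU X (subsetUr A G)) ltac:(by rewrite subUset hAGE hX).
have m3 := @rmono _ _ _ hM G (G :|: X) (subsetUl _ _) ltac:(by rewrite subUset hGE hX).
have m4 := @rmono _ _ _ hM (A :|: G) (A :|: G :|: X) (subsetUl _ _) ltac:(by rewrite subUset hAGE hX).
have m5 := @rmono _ _ _ hM (G :|: Fb i) (G :|: Fb i :|: X) (subsetUl _ _) ltac:(by rewrite subUset hG1E hX).
exact: (arith hi k1 k2 m1 m2 m3 m4 m5).
Qed.
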